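(* Assuming each arithmetic operation in $\mathbb{K}$ takes constant time, the $\mu$-Basis Algorithm (described in the context) on an input non-zero row vector $a\in\mathbb{K}[s]^n$ of degree $d$, $n>1$, has computational complexity $O(d^2n+d^3+n^2)$.
   Context: $\mu$-Basis Algorithm on $a=\sum_{j=0}^d c_js^j$ ($c_j\in\mathbb{K}^n$ row vectors): (1) determine $d$, the $c_j$, and form $A\in\mathbb{K}^{(2d+1)\times n(d+1)}$ whose $(i,\,kn+r)$ entry is the $r$-th entry of $c_{i-1-k}$ (zero if $i-1-k\notin\{0,\dots,d\}$). (2) Compute a partial reduced row-echelon form $E$ of $A$ by Gauss–Jordan elimination, processing columns left to right, carrying out row operations only on pivotal columns and basic non-pivotal columns, skipping non-pivotal columns whose index is congruent modulo $n$ to an already found non-pivotal index, and stopping forward elimination once $n-1$ basic non-pivotal columns are found; then perform backward elimination and normalization on those columns. (A column is pivotal if it is the first column and non-zero or independent of previous columns; basic non-pivotal indices are the minimal elements of the classes modulo $n$ of the non-pivotal indices.) (3) With $p$ the list of pivotal indices and $\tilde q=(\tilde q_1,\dots,\tilde q_{n-1})$ the basic non-pivotal indices, initialize an $n\times(n-1)$ zero matrix $M$; for each $j$ add $s^{\mathrm{quo}(\tilde q_j-1,n)}$ to $M_{\mathrm{rem}(\tilde q_j-1,n)+1,\,j}$; for each $i\le|p|$ and $j\le n-1$ subtract $E_{i,\tilde q_j}s^{\mathrm{quo}(p_i-1,n)}$ from $M_{\mathrm{rem}(p_i-1,n)+1,\,j}$; output $M$. *)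

(* Defs.v *)
(* An explicit cost model for the mu-Basis Algorithm:
   the algorithm is written in a simple "cost monad" (value, step count).
   Charged unit-cost steps: every field operation (+,-,*,/), every zero test
   of a field element, every write of a matrix/array entry (including
   polynomial-coefficient updates), and every loop iteration.  Integer index
   arithmetic and reads are free (they are O(1) and always accompany a
   charged step). *)
From HB Require Import structures.
From mathcomp Require Import all_boot all_order all_algebra.
Set Implicit Arguments.
Unset Strict Implicit.
Unset Printing Implicit Defensive.
Import GRing.Theory.
Local Open Scope ring_scope.

Definition Cost (A : Type) : Type := (A * nat)%type.
Definition cret {A : Type} (x : A) : Cost A := (x, 0%N).
Definition cbind {A B : Type} (m : Cost A) (f : A -> Cost B) : Cost B :=
  let y := f m.1 in (y.1, (m.2 + y.2)%N).
Notation "'LET' x <- m 'IN' f" := (cbind m (fun x => f))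
  (at level 200, x name, right associativity).
Definition tick : Cost unit := (tt, 1%N).
Definition cfor {T S : Type} (l : seq T) (s0 : S) (body : T -> S -> Cost S)
  : Cost S :=
  foldl (fun acc k => LET s <- acc IN LET _u <- tick IN body k s) (cret s0) l.

Section MuBasis.
Variable K : fieldType.

Definition fsub (x y : K) : Cost K := (x - y, 1%N).
Definition fmul (x y : K) : Cost K := (x * y, 1%N).
Definition fdiv (x y : K) : Cost K := (x / y, 1%N).
Definition fisz (x : K) : Cost bool := (x == 0, 1%N).

(* matrices over K, 0-indexed, with unit-cost entry writes *)
Definition Mat := nat -> nat -> K.
Definition mset (E : Mat) (i j : nat) (v : K) : Cost Mat :=
  (fun i' j' => if (i' == i) && (j' == j) then v else E i' j', 1%N).

(* matrices over K[s]; updating an entry (one coefficient) costs one step *)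
Definition PMat := nat -> nat -> {poly K}.
Definition pset (M : PMat) (i j : nat) (v : {poly K}) : Cost PMat :=
  (fun i' j' => if (i' == i) && (j' == j) then v else M i' j', 1%N).

Definition rdeg (n : nat) (a : 'rV[{poly K}]_n) : nat :=
  \max_(i < n) (size (a ord0 i)).-1.

(* r-th entry (0-indexed) of c_t, i.e. coefficient of s^t in a_r *)
Definition coefa (n : nat) (a : 'rV[{poly K}]_n) (r t : nat) : K :=
  match (insub r : option 'I_n) with Some i => (a ord0 i)`_t | None => 0 end.

(* Step (1): determine d (n steps) and form A (one write per entry).
   0-indexed: A(i, k*n + r) = (c_{i-k})_r. *)
Definition step1 (n : nat) (a : 'rV[{poly K}]_n) : Cost (nat * Mat) :=
  LET d <- ((rdeg a, n) : Cost nat) IN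
  let m := (2 * d + 1)%N in let N := (n * (d + 1))%N in
  LET A <- cfor (iota 0 m) (fun _ _ => 0 : K) (fun i A =>
             cfor (iota 0 N) A (fun col A =>
               let k := (col %/ n)%N in let r := (col %% n)%N in
               mset A i col (if (k <= i)%N && (i - k <= d)%N
                             then coefa a r (i - k) else 0))) IN
  cret (d, A).

Record FState := FS {
  fE : Mat;
  fr : nat;                              (* number of pivots found so far *)
  fops : seq (nat * nat * (nat -> K));   (* recorded row operations *)
  fp : seq nat;                          (* pivotal indices *)
  fq : seq nat;                          (* basic non-pivotal indices *)
  fseen : nat -> bool                    (* residues mod n of non-pivotal indices *)
}.

(* a recorded row operation (r, i, mu): swap rows r and i, then
   row i' -= mu i' * row r for i' > r; applied to column j only *)
Definition apply_op (m j : nat) (E : Mat) (op : nat * nat * (nat -> K)) : Cost Mat :=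
  let: (r, i, mu) := op in
  let x := E r j in let y := E i j in
  LET E <- mset E r j y IN LET E <- mset E i j x IN
  cfor (iota r.+1 (m - r.+1)) E (fun i' E =>
    LET t <- fmul (mu i') (E r j) IN LET u <- fsub (E i' j) t IN mset E i' j u).

Definition find_piv (m r j : nat) (E : Mat) : Cost (option nat) :=
  cfor (iota r (m - r)) None (fun i o =>
    match o with
    | Some _ => cret o
    | None => LET z <- fisz (E i j) IN cret (if z then None else Some i)
    end).

Definition elim (m r i j : nat) (E : Mat) : Cost (Mat * (nat -> K)) :=
  let x := E r j in let y := E i j in
  LET E <- mset E r j y IN LET E <- mset E i j x IN
  cfor (iota r.+1 (m - r.+1)) (E, fun _ => 0 : K) (fun i' st =>
    let: (E, mu) := st in
    LET c <- fdiv (E i' j) (E r j) IN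
    LET E <- mset E i' j 0 IN
    cret (E, fun k => if k == i' then c else mu k)).

(* processing column j: stop once n-1 basic non-pivotal columns are found;
   skip columns congruent mod n to a found non-pivotal index; otherwise
   bring the column up to date with all previous row operations (so row
   operations are carried out only on pivotal / basic non-pivotal columns),
   and decide whether it is pivotal *)
Definition fstep (n m : nat) (j : nat) (s : FState) : Cost FState :=
  if size (fq s) == n.-1 then cret s
  else if fseen s (j %% n)%N then cret s
  else
    LET E <- cfor (fops s) (fE s) (fun op E => apply_op m j E op) IN
    LET o <- find_piv m (fr s) j E IN
    match o with
    | Some i =>
        LET res <- elim m (fr s) i j E IN
        cret (FS res.1 (fr s).+1 (rcons (fops s) (fr s, i, res.2))
                 (rcons (fp s) j) (fq s) (fseen s))
    | None =>
        LET _u <- tick IN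
        cret (FS E (fr s) (fops s) (fp s) (rcons (fq s) j)
                 (fun k => if k == (j %% n)%N then true else fseen s k))
    end.

Definition forward (n m N : nat) (A : Mat) : Cost FState :=
  LET _u <- cfor (iota 0 n) tt (fun _ _ => cret tt) IN (* init residue array *)
  cfor (iota 0 N) (FS A 0 [::] [::] [::] (fun _ => false)) (fstep n m).

Definition backward (s : FState) : Cost Mat :=
  let cols := fp s ++ fq s in
  cfor (rev (iota 0 (fr s))) (fE s) (fun k E =>
    let pk := nth 0%N (fp s) k in
    let piv := E k pk in
    LET E <- cfor cols E (fun c E => LET v <- fdiv (E k c) piv IN mset E k c v) IN
    cfor (iota 0 k) E (fun i E =>
      let f := E i pk in
      cfor cols E (fun c E =>
        LET t <- fmul f (E k c) IN LET u <- fsub (E i c) t IN mset E i c u))).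

(* Step (3), 0-indexed: rem(q-1,n)+1, quo(q-1,n) become q %% n, q %/ n *)
Definition step3 (n : nat) (p q : seq nat) (E : Mat) : Cost PMat :=
  LET M <- cfor (iota 0 n) (fun _ _ => 0 : {poly K}) (fun i M =>
             cfor (iota 0 n.-1) M (fun j M => pset M i j 0)) IN
  LET M <- cfor (iota 0 n.-1) M (fun j M =>
             let qj := nth 0%N q j in
             pset M (qj %% n)%N j (M (qj %% n)%N j + 'X^(qj %/ n)%N)) IN
  cfor (iota 0 (size p)) M (fun i M => cfor (iota 0 n.-1) M (fun j M =>
     let pi := nth 0%N p i in let qj := nth 0%N q j in
     pset M (pi %% n)%N j (M (pi %% n)%N j - (E i qj) *: 'X^(pi %/ n)%N))).

Definition mu_basis (n : nat) (a : 'rV[{poly K}]_n) : Cost 'M[{poly K}]_(n, n.-1) :=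
  LET dA <- step1 a IN
  let d := dA.1 in
  let m := (2 * d + 1)%N in let N := (n * (d + 1))%N in
  LET s <- forward n m N dA.2 IN
  LET E <- backward s IN
  LET M <- step3 n (fp s) (fq s) E IN
  cret (\matrix_(i < n, j < n.-1) M i j).

Definition mu_basis_cost (n : nat) (a : 'rV[{poly K}]_n) : nat := (mu_basis a).2.

End MuBasis.

(* Main.v *)
Require Import Defs.
From HB Require Import structures.
From mathcomp Require Import all_boot all_order all_algebra zify.
Set Implicit Arguments. Unset Strict Implicit.

Lemma foldl_shift (T S : Type) (body : T -> S -> Cost S) l x c :
  foldl (fun acc k => LET s <- acc IN LET _u <- tick IN body k s) (x, c) l =
  ((foldl (fun acc k => LET s <- acc IN LET _u <- tick IN body k s) (x, 0%N) l).1,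
   (c + (foldl (fun acc k => LET s <- acc IN LET _u <- tick IN body k s) (x, 0%N) l).2)%N).
Proof.
elim: l x c => [|k l IH] x c /=; first by rewrite addn0.
rewrite /cbind /= IH [in RHS]IH /=; congr (_, _); lia.
Qed.

Lemma cfor_cons (T S : Type) k l (s0 : S) (body : T -> S -> Cost S) :
  cfor (k :: l) s0 body =
  ((cfor l (body k s0).1 body).1, (1 + (body k s0).2 + (cfor l (body k s0).1 body).2)%N).
Proof. by rewrite /cfor /= {1}/cbind /= foldl_shift. Qed.

Lemma cfor_nil (T S : Type) (s0 : S) (body : T -> S -> Cost S) : cfor [::] s0 body = (s0, 0%N).
Proof. by []. Qed.

Lemma cfor_inv (T S : Type) (P : S -> Prop) b l (s0 : S) (body : T -> S -> Cost S) :
  P s0 -> (forall k s, P s -> P (body k s).1 /\ ((body k s).2 <= b)%N) ->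
  P (cfor l s0 body).1 /\ ((cfor l s0 body).2 <= size l * b.+1)%N.
Proof.
move=> H0 Hb; elim: l s0 H0 => [|k l IH] s0 H0; first by rewrite cfor_nil.
rewrite cfor_cons /=; have [H1 H2] := Hb k s0 H0; have [H3 H4] := IH _ H1.
split=> //; rewrite mulSn; move: H2 H4; rewrite /=; lia.
Qed.

Lemma cfor_inv_nat (S : Type) (P : S -> Prop) b l (s0 : S) (body : nat -> S -> Cost S) :
  P s0 -> (forall k s, k \in l -> P s -> P (body k s).1 /\ ((body k s).2 <= b)%N) ->
  P (cfor l s0 body).1 /\ ((cfor l s0 body).2 <= size l * b.+1)%N.
Proof.
move=> H0 Hb; elim: l s0 H0 Hb => [|k l IH] s0 H0 Hb; first by rewrite cfor_nil.
rewrite cfor_cons /=; have [H1 H2] := Hb k s0 (mem_head _ _) H0.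
have Hb' : forall (k' : nat) s, k' \in l -> P s -> P (body k' s).1 /\ ((body k' s).2 <= b)%N.
  by move=> k' s kl; apply: Hb; rewrite inE kl orbT.
have [H3 H4] := IH _ H1 Hb'.
split=> //; rewrite mulSn; move: H2 H4; rewrite /=; lia.
Qed.

Lemma cfor_pot (T S : Type) (P : S -> Prop) (phi : S -> nat) B l (s0 : S) (body : T -> S -> Cost S) :
  P s0 -> (forall k s, P s -> P (body k s).1 /\ ((body k s).2 + B * phi s <= B * phi (body k s).1)%N) ->
  P (cfor l s0 body).1 /\ ((cfor l s0 body).2 + B * phi s0 <= size l + B * phi (cfor l s0 body).1)%N.
Proof.
move=> H0 Hb; elim: l s0 H0 => [|k l IH] s0 H0; first by rewrite cfor_nil /= leqnn.
rewrite cfor_cons /=; have [H1 H2] := Hb k s0 H0; have [H3 H4] := IH _ H1.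
split=> //; move: H2 H4; rewrite /=; lia.
Qed.
Ltac cbnd b := match goal with |- context [cfor ?l ?s0 ?bd] =>
  let Hb := fresh "Hb" in
  have Hb : forall k s, True -> True /\ ((bd k s).2 <= b)%N;
  [ | move: (@cfor_inv _ _ (fun _ => True) b l s0 bd I Hb) => [] _; clear Hb; set X := (cfor l s0 bd).2] end.

Section S.
Variable K : fieldType.

Lemma apply_op_cost m j (E : Mat K) op : ((apply_op m j E op).2 <= 2 + 4 * m)%N.
Proof.
case: op => [[r i] mu]; rewrite /apply_op /=.
cbnd 3%N; first by [].
rewrite size_iota; lia.
Qed.

Lemma find_piv_cost m r j (E : Mat K) :
  ((find_piv m r j E).2 <= 2 * m)%N /\ (forall i, (find_piv m r j E).1 = Some i -> r < m)%N.
Proof.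
rewrite /find_piv; split.
  cbnd 1%N; first by move=> k [x|].
  rewrite size_iota; lia.
move=> i; case: (ltnP r m) => // hrm.
have -> : (m - r = 0)%N by lia.
by [].
Qed.

Lemma elim_cost m r i j (E : Mat K) : ((elim m r i j E).2 <= 2 + 3 * m)%N.
Proof.
rewrite /elim /=.
cbnd 2%N; first by move=> k [E' mu].
rewrite size_iota; lia.
Qed.

Arguments elim : simpl never.
Arguments find_piv : simpl never.
Arguments cfor : simpl never.
Definition Inv m n (s : FState K) :=
  [/\ size (fops s) = fr s, size (fp s) = fr s, (fr s <= m)%N & (size (fq s) <= n.-1)%N].
Definition phi (s : FState K) := (fr s + size (fq s))%N.
Definition Bf m := (m * (3 + 4 * m) + 2 * m + 3 * m + 3)%N.

Lemma fstep_pot n m j s : Inv m n s ->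
  Inv m n (fstep n m j s).1 /\ ((fstep n m j s).2 + Bf m * phi s <= Bf m * phi (fstep n m j s).1)%N.
Proof.
case=> h1 h2 h3 h4; rewrite /fstep.
case: eqP => hq; first by split=> //=; rewrite add0n.
case: ifP => hs; first by split=> //=; rewrite add0n.
have hq' : (size (fq s) < n.-1)%N by lia.
set cE := cfor _ _ _.
have hE : (cE.2 <= m * (3 + 4 * m))%N.
  have [_ H] := @cfor_inv _ _ (fun _ => True) (2 + 4 * m)%N (fops s) (fE s)
     (fun op E => apply_op m j E op) I (fun k s _ => conj I (apply_op_cost _ _ _ _)).
  apply: leq_trans H _; rewrite h1; apply: leq_mul => //; lia.
have [hf1 hf2] := find_piv_cost m (fr s) j cE.1.
case E1: (find_piv m (fr s) j cE.1).1 => [i|].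
  have := hf2 i E1 => hr.
  have he := elim_cost m (fr s) i j cE.1.
  rewrite /cbind E1; cbv beta iota zeta.
  set el := elim m (fr s) i j cE.1 in he *; clearbody el; rewrite /=.
  split; first by split=> //=; rewrite ?size_rcons ?h1 ?h2.
  rewrite /phi /= /Bf; nia.
rewrite /cbind /= E1 /=.
split; first by split=> //=; rewrite ?size_rcons.
rewrite /phi /= size_rcons /Bf; nia.
Qed.

Lemma cbind_snd (A B : Type) (x : Cost A) (f : A -> Cost B) : (cbind x f).2 = (x.2 + (f x.1).2)%N.
Proof. by []. Qed.

Lemma cret_snd (A : Type) (x : A) : (cret x).2 = 0%N.
Proof. by []. Qed.

Lemma forward_cost n m N (A : Mat K) :
  Inv m n (forward n m N A).1 /\ ((forward n m N A).2 <= n + N + Bf m * (m + n.-1))%N.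
Proof.
rewrite /forward /cbind /=.
have [_ H0] := @cfor_inv _ _ (fun _ => True) 0 (iota 0 n) tt (fun _ _ => cret tt) I
  (fun _ _ _ => conj I (leqnn 0)).
have I0 : Inv m n (FS A 0 [::] [::] [::] (fun _ => false)) by split=> //=.
have [H1 H2] := @cfor_pot _ _ (Inv m n) (@phi) (Bf m) (iota 0 N) _ (fstep n m) I0
  (fun k s h => @fstep_pot n m k s h).
split=> //.
case: H1 => _ _ h3 h4; move: H0 H2; rewrite !size_iota /phi /=.
set X := (cfor _ _ _).2; set Y := (cfor _ _ _).2.
set f := (cfor _ _ (fstep n m)).1 in h3 h4 *.
move=> H0 H2.
have : (Bf m * (fr f + size (fq f)) <= Bf m * (m + n.-1))%N by apply: leq_mul => //; lia.
lia.
Qed.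

Lemma backward_cost m n (s : FState K) : Inv m n s ->
  ((backward s).2 <= m * (3 * (m + n.-1) + m * (4 * (m + n.-1) + 1)).+1)%N.
Proof.
case=> h1 h2 h3 h4; rewrite /backward.
set c := (fp s ++ fq s).
have hc : (size c <= m + n.-1)%N by rewrite size_cat h2; lia.
have Hb : forall k (E : Mat K), k \in rev (iota 0 (fr s)) -> True ->
   True /\ ((let pk := nth 0%N (fp s) k in
    let piv := E k pk in
    LET E <- cfor c E (fun c E => LET v <- fdiv (E k c) piv IN mset E k c v) IN
    cfor (iota 0 k) E (fun i E =>
      let f := E i pk in
      cfor c E (fun c E =>
        LET t <- fmul f (E k c) IN LET u <- fsub (E i c) t IN mset E i c u))).2
     <= 3 * (m + n.-1) + m * (4 * (m + n.-1) + 1))%N.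
  move=> k E; rewrite mem_rev mem_iota => /andP[_ hk] _; split=> //.
  cbv beta zeta; rewrite cbind_snd; cbv beta.
  have [_ HA] := @cfor_inv _ _ (fun _ => True) 2 c E
     (fun c0 E0 => LET v <- fdiv (E0 k c0) (E k (nth 0%N (fp s) k)) IN mset E0 k c0 v) I
     (fun _ _ _ => conj I (leqnn 2)).
  set E1 := (cfor c E _).1.
  have HBi : forall i (E : Mat K), True -> True /\ ((cfor c E (fun c0 E0 =>
        LET t <- fmul (E i (nth 0%N (fp s) k)) (E0 k c0) IN LET u <- fsub (E0 i c0) t IN mset E0 i c0 u)).2
        <= size c * 4)%N.
    move=> i E' _; split=> //.
    exact: (proj2 (@cfor_inv _ _ (fun _ => True) 3 c E' (fun c0 E0 =>
        LET t <- fmul (E' i (nth 0%N (fp s) k)) (E0 k c0) IN LET u <- fsub (E0 i c0) t IN mset E0 i c0 u) I (fun _ _ _ => conj I (leqnn 3)))).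
  have [_ HB] := @cfor_inv _ _ (fun _ => True) (size c * 4) (iota 0 k) E1 _ I HBi.
  move: HA HB; rewrite size_iota.
  set X := (cfor c E _).2; set Y := (cfor (iota 0 k) E1 _).2 => HA HB.
  have : (k * (size c * 4).+1 <= m * (4 * (m + n.-1) + 1))%N by apply: leq_mul; lia.
  have : (size c * 3 <= 3 * (m + n.-1))%N by lia.
lia.
have [_ H] := @cfor_inv_nat _ (fun _ => True) _ (rev (iota 0 (fr s))) (fE s) _ I Hb.
move: H; rewrite size_rev size_iota => H.
apply: leq_trans H _; apply: leq_mul => //.
Qed.

Lemma cfor_const (T S : Type) b l (s0 : S) (body : T -> S -> Cost S) :
  (forall k s, ((body k s).2 <= b)%N) -> ((cfor l s0 body).2 <= size l * b.+1)%N.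
Proof. by move=> H; exact: (proj2 (@cfor_inv _ _ (fun _ => True) b l s0 body I (fun k s _ => conj I (H k s)))). Qed.

Lemma step3_cost n p q (E : Mat K) :
  ((step3 n p q E).2 <= n * (n.-1 * 2).+1 + n.-1 * 2 + size p * (n.-1 * 2).+1)%N.
Proof.
rewrite /step3 cbind_snd; cbv beta; rewrite cbind_snd; cbv beta.
have H1 := @cfor_const _ _ (size (iota 0 n.-1) * 2) (iota 0 n) (fun _ _ => 0%R : {poly K})
  (fun i M => cfor (iota 0 n.-1) M (fun j M => pset M i j 0%R))
  (fun k s => @cfor_const _ _ 1 (iota 0 n.-1) s (fun j M => pset M k j 0%R) (fun _ _ => leqnn 1)).
set M1 := (cfor (iota 0 n) _ _).1.
have H2 := @cfor_const _ _ 1 (iota 0 n.-1) M1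
  (fun j M => let qj := nth 0%N q j in
             pset M (qj %% n)%N j (M (qj %% n)%N j + 'X^(qj %/ n)%N)%R) (fun _ _ => leqnn 1).
set M2 := (cfor (iota 0 n.-1) M1 _).1.
have H3 := @cfor_const _ _ (size (iota 0 n.-1) * 2) (iota 0 (size p)) M2
  (fun i M => cfor (iota 0 n.-1) M (fun j M =>
     let pi := nth 0%N p i in let qj := nth 0%N q j in
     pset M (pi %% n)%N j (M (pi %% n)%N j - (E i qj) *: 'X^(pi %/ n)%N)%R))
  (fun k s => @cfor_const _ _ 1 (iota 0 n.-1) s (fun j M =>
     let pi := nth 0%N p k in let qj := nth 0%N q j in
     pset M (pi %% n)%N j (M (pi %% n)%N j - (E k qj) *: 'X^(pi %/ n)%N)%R) (fun _ _ => leqnn 1)).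
move: H1 H2 H3; rewrite !size_iota.
set X := (cfor (iota 0 n) _ _).2; set Y := (cfor (iota 0 n.-1) M1 _).2;
set Z := (cfor (iota 0 (size p)) M2 _).2.
lia.
Qed.

Lemma step1_cost n (a : 'rV[{poly K}]_n) :
  (step1 a).1.1 = rdeg a /\
  ((step1 a).2 <= n + (2 * rdeg a + 1) * ((n * (rdeg a + 1)) * 2).+1)%N.
Proof.
rewrite /step1 cbind_snd; cbv beta; rewrite cbind_snd; cbv beta zeta.
split; first by [].
rewrite [(rdeg a, n).1]/= [(rdeg a, n).2]/=.
set d := rdeg a.
have H := @cfor_const _ _ (size (iota 0 (n * (d + 1))) * 2) (iota 0 (2 * d + 1)) (fun _ _ => 0%R : K) _
  (fun k0 s => @cfor_const _ _ 1 (iota 0 (n * (d + 1))) s (fun col A =>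
      mset A k0 col (if ((col %/ n)%N <= k0)%N && (k0 - (col %/ n)%N <= d)%N
                             then coefa a (col %% n)%N (k0 - (col %/ n)%N) else 0%R)) (fun _ _ => leqnn 1)).
move: H; rewrite !size_iota.
rewrite cret_snd; set X := (cfor _ _ _).2.
lia.
Qed.
End S.
Lemma arith d n f x1 x2 x3 x4 : (1 < n)%N -> (f <= 2 * d + 1)%N ->
  (x1 <= n + (2 * d + 1) * (n * (d + 1) * 2).+1)%N ->
  (x2 <=
  n + n * (d + 1) +
  ((2 * d + 1) * (3 + 4 * (2 * d + 1)) + 2 * (2 * d + 1) + 3 * (2 * d + 1) +
   3) *
  (2 * d + 1 + n.-1))%N ->
  (x3 <=
  (2 * d + 1) *
  (3 * (2 * d + 1 + n.-1) + (2 * d + 1) * (4 * (2 * d + 1 + n.-1) + 1)).+1)%N ->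
  (x4 <= n * (n.-1 * 2).+1 + n.-1 * 2 + f * (n.-1 * 2).+1)%N ->
  (x1 + (x2 + (x3 + (x4 + 0))) <= 1000 * (d ^ 2 * n + d ^ 3 + n ^ 2))%N.
Proof.
move=> hn hf h1 h2 h3 h4.
have [n1 hn1] : exists n1, n = n1.+2 by exists n.-2; lia.
subst n.
rewrite /= in h2 h3 h4 *.
have hf4 : (f * (n1.+1 * 2).+1 <= (2 * d + 1) * (n1.+1 * 2).+1)%N by apply: leq_mul.
rewrite !expnS !expn0 !muln1.
have e1 : (d * n1 <= d * d * n1)%N by case: d {h1 h2 h3 h4 hf hf4} => [|d] //; rewrite leq_mul2r leq_pmulr ?orbT.
have e2 : (d <= d * d * d)%N by case: d {h1 h2 h3 h4 hf hf4 e1} => [|d] //; rewrite -mulnA leq_pmulr // muln_gt0.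
have p1 := leq0n (d*d*d); have p2 := leq0n (d*d*n1); have p3 := leq0n (d*d); have p4 := leq0n (d*n1); have p5 := leq0n (n1*n1).
set S := (d * d * n1.+2 + d * (d * d) + n1.+2 * n1.+2)%N.
have b1 : (x1 <= 200 * S)%N by rewrite /S; clear -h1 e1 e2 p1 p2 p3 p4 p5; lia.
have b2 : (x2 <= 300 * S)%N by rewrite /S; clear -h2 e1 e2 p1 p2 p3 p4 p5; lia.
have b3 : (x3 <= 300 * S)%N by rewrite /S; clear -h3 e1 e2 p1 p2 p3 p4 p5; lia.
have b4 : (x4 <= 100 * S)%N by rewrite /S; clear -h4 hf4 e1 e2 p1 p2 p3 p4 p5; lia.
clearbody S; lia.
Qed.
Unset Implicit Arguments.
Theorem theorem3 (K : fieldType) :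
  exists C : nat, forall (n d : nat) (a : 'rV[{poly K}]_n),
    (1 < n)%N -> (a != 0)%R -> rdeg a = d ->
    (mu_basis_cost a <= C * (d ^ 2 * n + d ^ 3 + n ^ 2))%N.
Proof.
exists 1000%N => n d a hn _ hd.
rewrite /mu_basis_cost /mu_basis cbind_snd; cbv beta zeta.
have [e1 c1] := step1_cost a.
set s1 := step1 a in e1 c1 *.
rewrite cbind_snd.
have [i2 c2] := forward_cost n (2 * s1.1.1 + 1) (n * (s1.1.1 + 1)) s1.1.2.
set s2 := forward _ _ _ _ in i2 c2 *.
rewrite cbind_snd.
have c3 := backward_cost i2.
set s3 := backward s2.1 in c3 *.
rewrite cbind_snd cret_snd.
have c4 := step3_cost n (fp s2.1) (fq s2.1) s3.1.
set s4 := step3 _ _ _ _ in c4 *.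
case: i2 => _ h2 h3 _.
move: c1 c2 c3 c4; rewrite h2 e1 hd /Bf.
clearbody s1 s2 s3 s4.
move: h3; rewrite e1 hd => h3 c1 c2 c3 c4.
exact: (arith hn h3 c1 c2 c3 c4).
Qed.
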